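(* Let $X_1,\dots,X_n$ be independent random variables with values in $\mathbb{Z}_+$ and means $E(X_i)=p_i>0$, and let $S_n=\sum_{i=1}^nX_i$, $\lambda=\sum_{i=1}^np_i$. Then $$K(S_n)\le\sum_{i=1}^n\frac{p_i}{\lambda}K(X_i).$$
   Context: For a random variable $X$ with distribution $P$ on $\mathbb{Z}_+$ and mean $m>0$, the scaled score function is $\rho_X(x)=\frac{(x+1)P(x+1)}{mP(x)}-1$ and the scaled Fisher information is $K(X)=mE[\rho_X(X)^2]=m\sum_{x\ge0}\frac{\big(\frac{(x+1)P(x+1)}{m}-P(x)\big)^2}{P(x)}$, with conventions $0/0=0$, $c/0=\infty$ for $c>0$. *)

(* Defs.v *)
From HB Require Import structures.
From mathcomp Require Import all_boot all_order all_algebra.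
From mathcomp Require Import all_classical all_reals all_analysis.
Set Implicit Arguments. Unset Strict Implicit. Unset Printing Implicit Defensive.
Import Order.TTheory GRing.Theory Num.Theory.
Local Open Scope ring_scope.
Local Open Scope ereal_scope.

Section Defs.
Variable R : realType.

Definition is_pmf (P : nat -> R) : Prop :=
  (forall x, (0 <= P x)%R) /\ \sum_(0 <= x <oo) (P x)%:E = 1.

Definition mean_e (P : nat -> R) : \bar R :=
  \sum_(0 <= x <oo) ((x%:R * P x)%R)%:E.

(* Real-valued mean (used when it is finite). *)
Definition mean (P : nat -> R) : R := fine (mean_e P).

Definition fisher_term (P : nat -> R) (m : R) (x : nat) : \bar R :=
  let d := ((x.+1)%:R * P x.+1 / m - P x)%R in
  if P x == 0%R then (if d == 0%R then 0 else +oo)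
  else ((d ^+ 2) / P x)%:E.

Definition K (P : nat -> R) : \bar R :=
  (mean P)%:E * \sum_(0 <= x <oo) fisher_term P (mean P) x.

(* Law of the sum of two independent Z_+-valued variables: convolution. *)
Definition conv (P Q : nat -> R) : nat -> R :=
  fun z => (\sum_(i < z.+1) P i * Q (z - i)%N)%R.

Definition dirac0 : nat -> R := fun x => if x == 0%N then 1%R else 0%R.

(* Law of S_n = X_1 + ... + X_n for independent X_i with laws P i. *)
Definition conv_all (n : nat) (P : 'I_n -> nat -> R) : nat -> R :=
  \big[conv/dirac0]_(i < n) P i.

End Defs.

(* Main.v *)
Require Import Defs.
From HB Require Import structures.
From mathcomp Require Import all_boot all_order all_algebra.
From mathcomp Require Import all_classical all_reals all_analysis.
From mathcomp Require Import ring lra zify.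
Import Order.TTheory GRing.Theory Num.Theory.
Local Open Scope ring_scope.

Section S.
Variable R : realType.
Implicit Types (f g : nat -> R).

Definition psum f N := \sum_(0 <= x < N) f x.

Definition hasSum f c := [/\ forall x, 0 <= f x,
  forall N, psum f N <= c & forall e, 0 < e -> exists N, c - e <= psum f N].

Lemma series_le f c : (forall x, 0 <= f x) -> (forall N, psum f N <= c) ->
  (\sum_(0 <= x <oo) (f x)%:E <= c%:E)%E.
Proof.
move=> f0 H; apply: lime_le.
  by apply: (@is_cvg_nneseries _ _ xpredT 0%N) => n _ _; rewrite lee_fin.
by apply: nearW => N; rewrite sumEFin lee_fin; exact: H.
Qed.

Lemma psum_le_series f N : (forall x, 0 <= f x) ->
  ((psum f N)%:E <= \sum_(0 <= x <oo) (f x)%:E)%E.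
Proof. by move=> f0; rewrite /psum -sumEFin; apply: nneseries_lim_ge => n _ _; rewrite lee_fin. Qed.

Lemma hasSumE f c : (forall x, 0 <= f x) ->
  (\sum_(0 <= x <oo) (f x)%:E = c%:E)%E -> hasSum f c.
Proof.
move=> f0 Hc; split => //.
  by move=> N; rewrite -lee_fin -Hc; exact: psum_le_series.
move=> e e0; apply: contrapT => H.
have : (\sum_(0 <= x <oo) (f x)%:E <= (c - e)%:E)%E.
  apply: series_le => // N; rewrite leNgt; apply/negP => h; apply: H.
  by exists N; exact: ltW.
by rewrite Hc lee_fin; lra.
Qed.

Lemma hasSum_series f c : hasSum f c -> (\sum_(0 <= x <oo) (f x)%:E = c%:E)%E.
Proof.
case=> f0 Hle Hge; apply/eqP; rewrite eq_le series_le //=.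
apply/lee_addgt0Pr => e e0.
have [N HN] := Hge e e0.
apply: le_trans; last exact: (leeD2r (e%:E) (@psum_le_series f N f0)).
by rewrite -EFinD lee_fin; lra.
Qed.

Lemma psum_ge0 f N : (forall x, 0 <= f x) -> 0 <= psum f N.
Proof. by move=> f0; rewrite /psum; apply: sumr_ge0. Qed.

Lemma psumS f N : psum f N.+1 = psum f N + f N.
Proof. by rewrite /psum big_nat_recr. Qed.

Lemma psum_mono f N M : (forall x, 0 <= f x) -> (N <= M)%N -> psum f N <= psum f M.
Proof.
move=> f0 /subnKC <-; elim: (M - N)%N => [|k IH]; first by rewrite addn0.
by rewrite addnS psumS; apply: (le_trans IH); rewrite lerDl.
Qed.



Definition T2 (h : nat -> nat -> R) N := \sum_(0 <= x < N) \sum_(0 <= y < N - x) h x y.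

Lemma tri_conv (h : nat -> nat -> R) N :
  \sum_(0 <= z < N) \sum_(0 <= i < z.+1) h i (z - i)%N = T2 h N.
Proof.
rewrite /T2; elim: N => [|N IH]; first by rewrite !big_geq.
rewrite big_nat_recr //= IH.
rewrite [RHS](@eq_big_nat _ _ _ 0 N.+1 _ (fun x => \sum_(0 <= y < N - x) h x y + h x (N - x)%N)); last first.
  move=> x /andP[_ hx]; rewrite subSn // big_nat_recr //.
rewrite [RHS]big_split /= [X in _ = X + _]big_nat_recr //= subnn [\sum_(0 <= y < 0) h N y]big_geq // addr0.
by [].
Qed.

Lemma titu2 (a b x y : R) : 0 <= x -> 0 <= y -> (x = 0 -> a = 0) -> (y = 0 -> b = 0) ->
  (a + b) ^+ 2 / (x + y) <= a ^+ 2 / x + b ^+ 2 / y.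
Proof.
move=> x0 y0 ha hb.
have [xe|xn0] := eqVneq x 0.
  by rewrite xe ha // !(add0r, expr2, mul0r, mulr0).
have [ye|yn0] := eqVneq y 0.
  by rewrite ye hb // !(addr0, expr2, mul0r, mulr0).
have xp : 0 < x by rewrite lt_neqAle eq_sym xn0.
have yp : 0 < y by rewrite lt_neqAle eq_sym yn0.
rewrite -subr_ge0.
have -> : a ^+ 2 / x + b ^+ 2 / y - (a + b) ^+ 2 / (x + y) =
   (a * y - b * x) ^+ 2 / (x * y * (x + y)).
  field; apply/and3P; split; rewrite ?gt_eqF //; lra.
apply: divr_ge0; first exact: sqr_ge0.
apply: mulr_ge0; [exact: mulr_ge0|lra].
Qed.

Lemma titu n (c w : nat -> R) : (forall i, 0 <= w i) -> (forall i, w i = 0 -> c i = 0) ->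
  (\sum_(0 <= i < n) c i) ^+ 2 / (\sum_(0 <= i < n) w i) <= \sum_(0 <= i < n) c i ^+ 2 / w i
  /\ (\sum_(0 <= i < n) w i = 0 -> \sum_(0 <= i < n) c i = 0).
Proof.
move=> w0 hw; elim: n => [|n [IH1 IH2]].
  by rewrite !big_geq // expr0n /= mul0r.
rewrite !big_nat_recr //=; split.
  apply: le_trans (lerD IH1 (lexx _)).
  apply: titu2 => //; [exact: sumr_ge0|exact: hw].
move=> /eqP; rewrite paddr_eq0; [|exact: sumr_ge0|exact: w0].
by case/andP => /eqP/IH2 -> /eqP/hw ->; rewrite addr0.
Qed.


Definition tri (f g : nat -> R) N := T2 (fun x y => f x * g y) N.

Lemma triE f g N : tri f g N = \sum_(0 <= x < N) f x * psum g (N - x).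
Proof. by rewrite /tri /T2; apply: eq_bigr => x _; rewrite /psum mulr_sumr. Qed.

Lemma tri_le f g F G N : hasSum f F -> hasSum g G -> tri f g N <= F * G.
Proof.
move=> [f0 fle _] [g0 gle _]; rewrite triE.
apply: (@le_trans _ _ (\sum_(0 <= x < N) f x * G)).
  by apply: ler_sum => x _; exact: (ler_wpM2l (f0 x) (gle _)).
rewrite -mulr_suml mulrC [F * G]mulrC.
have G0 : 0 <= G by apply: le_trans (gle 0%N); rewrite /psum big_geq.
exact: (ler_wpM2l G0 (fle N)).
Qed.

Lemma tri_ge f g M : (forall x, 0 <= f x) -> (forall x, 0 <= g x) ->
  psum f M * psum g M <= tri f g (M + M).
Proof.
move=> f0 g0; rewrite triE.
have -> : psum f M * psum g M = \sum_(0 <= x < M) f x * psum g M.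
  by rewrite /psum mulr_suml.
apply: (@le_trans _ _ (\sum_(0 <= x < M) f x * psum g (M + M - x))).
  apply: ler_sum_nat => x /andP[_ hx]; apply: (ler_wpM2l (f0 x)).
  by apply: psum_mono => //; lia.
apply: (@psum_mono (fun x => f x * psum g (M + M - x)) M (M + M)); last lia.
by move=> x; apply: mulr_ge0 => //; apply: psum_ge0.
Qed.

Lemma tri_lim f g F G d : hasSum f F -> hasSum g G -> 0 < d ->
  exists M0, forall M, (M0 <= M)%N -> F * G - d * (F + G) <= tri f g (M + M).
Proof.
move=> hf hg d0; have [f0 fle fge] := hf; have [g0 gle gge] := hg.
have [N1 h1] := fge d d0; have [N2 h2] := gge d d0.
exists (maxn N1 N2) => M hM.
apply: le_trans (tri_ge f g M f0 g0).
have a1 : F - d <= psum f M by apply: le_trans h1 (@psum_mono f N1 M f0 _); lia.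
have a2 : G - d <= psum g M by apply: le_trans h2 (@psum_mono g N2 M g0 _); lia.
have b1 := fle M; have b2 := gle M.
have c1 := psum_ge0 f M f0; have c2 := psum_ge0 g M g0.
have G0 : 0 <= G by apply: le_trans c2 b2.
nra.
Qed.

End S.
Arguments psum {R}.
Arguments hasSum {R}.
Arguments series_le {R}.
Arguments psum_le_series {R}.
Arguments hasSumE {R}.
Arguments hasSum_series {R}.
Arguments psum_ge0 {R}.
Arguments psumS {R}.
Arguments psum_mono {R}.
Arguments T2 {R}.
Arguments tri_conv {R}.
Arguments titu2 {R}.
Arguments titu {R}.
Arguments tri {R}.
Arguments triE {R}.
Arguments tri_le {R}.
Arguments tri_ge {R}.
Arguments tri_lim {R}.

Set Implicit Arguments. Unset Strict Implicit.

Section S2.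
Variable R : realType.
Implicit Types (f g P Q : nat -> R).

Definition sh f x := x.+1%:R * f x.+1.
Definition uu f (m : R) x := sh f x - m * f x.

Lemma hasSum_ge0 f c : hasSum f c -> 0 <= c.
Proof. by case=> _ h _; apply: le_trans (h 0%N); rewrite /psum big_geq. Qed.

Lemma hasSum_sh f m : hasSum (fun x => x%:R * f x) m -> hasSum (sh f) m.
Proof.
case=> f0 fle fge.
have E N : psum (sh f) N = psum (fun x => x%:R * f x) N.+1.
  by rewrite /psum big_nat_recl //= mul0r add0r.
split.
- by move=> x; exact: f0.
- by move=> N; rewrite E.
- move=> e e0; have [N hN] := fge e e0; exists N; rewrite E.
  by apply: le_trans hN _; apply: psum_mono.
Qed.

Lemma hasSum_scale f c k : 0 <= k -> hasSum f c -> hasSum (fun x => k * f x) (k * c).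
Proof.
move=> k0 [f0 fle fge]; have [->|kn0] := eqVneq k 0.
  split; [by move=> x; rewrite mul0r|by move=> N; rewrite mul0r /psum big1 // => x; rewrite mul0r|].
  by move=> e e0; exists 0%N; rewrite mul0r /psum big_geq //; lra.
have kp : 0 < k by rewrite lt_neqAle eq_sym kn0.
split.
- by move=> x; apply: mulr_ge0.
- by move=> N; rewrite /psum -mulr_sumr; exact: (ler_wpM2l k0 (fle N)).
- move=> e e0; have [N hN] := fge (e / k) (divr_gt0 e0 kp); exists N.
  rewrite /psum -mulr_sumr; rewrite -/(psum f N).
  have := ler_wpM2l k0 hN.
  by rewrite mulrBr mulrCA divff ?gt_eqF // mulr1.
Qed.

Lemma hasSum_tri2 h f1 g1 f2 g2 F1 G1 F2 G2 :
  hasSum f1 F1 -> hasSum g1 G1 -> hasSum f2 F2 -> hasSum g2 G2 ->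
  (forall x, 0 <= h x) ->
  (forall N, psum h N = tri f1 g1 N + tri f2 g2 N) ->
  hasSum h (F1 * G1 + F2 * G2).
Proof.
move=> h1 h2 h3 h4 h0 E; split => //.
  by move=> N; rewrite E; apply: lerD; apply: tri_le.
move=> e e0.
have H1 := hasSum_ge0 h1; have H2 := hasSum_ge0 h2.
have H3 := hasSum_ge0 h3; have H4 := hasSum_ge0 h4.
set s := F1 + G1 + F2 + G2 + 1.
have s0 : 0 < s by rewrite /s; lra.
have d0 : 0 < e / s by apply: divr_gt0.
have [M1 HM1] := tri_lim _ _ _ _ _ h1 h2 d0; have [M2 HM2] := tri_lim _ _ _ _ _ h3 h4 d0.
exists (maxn M1 M2 + maxn M1 M2)%N; rewrite E.
have a1 := HM1 (maxn M1 M2) (leq_maxl _ _).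
have a2 := HM2 (maxn M1 M2) (leq_maxr _ _).
have : e / s * (F1 + G1 + F2 + G2) <= e.
  have hX : F1 + G1 + F2 + G2 <= s by rewrite /s; lra.
  by have := ler_wpM2l (ltW d0) hX; rewrite divfK ?gt_eqF.
lra.
Qed.

Lemma convE P Q z : Defs.conv P Q z = \sum_(0 <= i < z.+1) P i * Q (z - i)%N.
Proof. by rewrite /Defs.conv big_mkord. Qed.

Lemma conv_ge0 P Q z : (forall x, 0 <= P x) -> (forall x, 0 <= Q x) -> 0 <= Defs.conv P Q z.
Proof. by move=> P0 Q0; rewrite convE; apply: sumr_ge0 => i _; apply: mulr_ge0. Qed.

Lemma psum_conv P Q N : psum (Defs.conv P Q) N = tri P Q N.
Proof. by rewrite /psum; under eq_bigr do rewrite convE; rewrite (tri_conv (fun x y => P x * Q y)). Qed.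

Lemma psum_conv_mean P Q N :
  psum (fun z => z%:R * Defs.conv P Q z) N =
  tri (fun x => x%:R * P x) Q N + tri P (fun y => y%:R * Q y) N.
Proof.
have -> : tri (fun x => x%:R * P x) Q N + tri P (fun y => y%:R * Q y) N =
  T2 (fun x y => x%:R * P x * Q y + P x * (y%:R * Q y)) N.
  by rewrite /tri /T2 -big_split; apply: eq_bigr => x _; rewrite -big_split.
rewrite -tri_conv /psum; apply: eq_bigr => z _.
rewrite convE mulr_sumr; apply: eq_big_nat => i /andP[_ hi].
by rewrite -{1}(subnKC (hi : (i <= z)%N)) natrD; ring.
Qed.

Lemma conv_id P Q p q z :
  z.+1%:R * Defs.conv P Q z.+1 - (p + q) * Defs.conv P Q z =
  \sum_(0 <= i < z.+1) (uu P p i * Q (z - i)%N + P i * uu Q q (z - i)%N).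
Proof.
have E1 : z.+1%:R * Defs.conv P Q z.+1 =
   \sum_(0 <= i < z.+1) (sh P i * Q (z - i)%N + P i * sh Q (z - i)%N).
  rewrite convE big_distrr /=.
  rewrite (@eq_big_nat _ _ _ 0 z.+2 _ (fun i => i%:R * P i * Q (z.+1 - i)%N
     + P i * ((z.+1 - i)%N%:R * Q (z.+1 - i)%N))); last first.
    move=> i /andP[_ hi]; rewrite -{1}(subnKC (hi : (i <= z.+1)%N)) natrD; ring.
  rewrite big_split /= big_split /=; congr (_ + _).
    by rewrite big_nat_recl //= mul0r mul0r add0r; apply: eq_bigr => i _; rewrite /sh subSS.
  rewrite big_nat_recr //= subnn mul0r mulr0 addr0.
  by apply: eq_big_nat => i /andP[_ hi]; rewrite /sh subSn.
rewrite E1 /uu convE big_distrr /= -sumrB.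
by apply: eq_bigr => i _; ring.
Qed.

End S2.

Section S3.
Variable R : realType.
Implicit Types (f g P Q : nat -> R).

Lemma fisher_ge0 f m x : (forall x, 0 <= f x) -> (0 <= fisher_term f m x)%E.
Proof.
move=> f0; rewrite /fisher_term /=; case: eqP => _; first by case: eqP => _ //; exact: leey.
by rewrite lee_fin; apply: divr_ge0; [exact: sqr_ge0|exact: f0].
Qed.

Lemma fisher_E f m x : 0 < m -> (f x = 0 -> uu f m x = 0) ->
  fisher_term f m x = ((uu f m x) ^+ 2 / f x / m ^+ 2)%:E.
Proof.
move=> m0 hz.
have hd : x.+1%:R * f x.+1 / m - f x = uu f m x / m.
  by rewrite /uu /sh; field; rewrite gt_eqF.
rewrite /fisher_term /= hd; case: eqP => [h0|hn].
  by rewrite hz // mul0r eqxx h0 expr0n /= !mul0r.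
have fx0 : f x != 0 by apply/eqP.
have mn0 : m != 0 by rewrite gt_eqF.
congr EFin; field; by rewrite ?fx0 ?mn0.
Qed.

Lemma fisher_Z f m x : 0 < m -> fisher_term f m x != +oo%E -> f x = 0 -> uu f m x = 0.
Proof.
move=> m0 hne h0; move: hne; rewrite /fisher_term /= h0 eqxx.
case: ifP => [/eqP hd _|_]; last by rewrite eqxx.
rewrite /uu /sh h0 mulr0 subr0.
have := congr1 (fun t => t * m) hd; rewrite subr0 mul0r divfK // ?gt_eqF //.
Qed.

Lemma series_fin f m : (forall x, 0 <= f x) -> 0 < m ->
  (\sum_(0 <= x <oo) fisher_term f m x != +oo)%E ->
  (forall x, f x = 0 -> uu f m x = 0) /\
  exists t, hasSum (fun x => (uu f m x) ^+ 2 / f x / m ^+ 2) t /\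
            (\sum_(0 <= x <oo) fisher_term f m x = t%:E)%E.
Proof.
move=> f0 m0 hne.
have Z : forall x, f x = 0 -> uu f m x = 0.
  move=> x; apply: fisher_Z => //; apply/negP => /eqP hinf.
  move/negP: hne; apply; apply/eqP.
  apply: (@nneseries_pinfty _ (fisher_term f m) xpredT x) => // n _.
  exact: fisher_ge0.
split => //.
have E : (\sum_(0 <= x <oo) fisher_term f m x =
          \sum_(0 <= x <oo) ((uu f m x) ^+ 2 / f x / m ^+ 2)%:E)%E.
  by apply: eq_eseriesr => x _; apply: fisher_E => //; exact: Z.
have s0 : (0 <= \sum_(0 <= x <oo) fisher_term f m x)%E.
  by apply: nneseries_ge0 => n _ _; exact: fisher_ge0.
have fin : (\sum_(0 <= x <oo) fisher_term f m x)%E \is a fin_num.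
  by rewrite ge0_fin_numE // lt_neqAle hne leey.
exists (fine (\sum_(0 <= x <oo) fisher_term f m x)%E); split; last by rewrite fineK.
apply: hasSumE; last by rewrite -E fineK.
move=> x; apply: divr_ge0; last exact: sqr_ge0.
by apply: divr_ge0; [exact: sqr_ge0|exact: f0].
Qed.

End S3.

Section S4.
Variable R : realType.
Implicit Types (f g P Q : nat -> R).

Lemma pt_eq (a b x y p q : R) : p != 0 -> q != 0 -> (x = 0 -> a = 0) -> (y = 0 -> b = 0) ->
  (a * y + x * b) ^+ 2 / (x * y) =
  p ^+ 2 * (a ^+ 2 / x / p ^+ 2) * y + 2 * (a * b) + x * (q ^+ 2 * (b ^+ 2 / y / q ^+ 2)).
Proof.
move=> p0 q0 ha hb.
have [xe|xn] := eqVneq x 0.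
  by rewrite xe ha // !(mul0r, mulr0, add0r, addr0, expr2, invr0).
have [ye|yn] := eqVneq y 0.
  by rewrite ye hb // !(mul0r, mulr0, add0r, addr0, expr2, invr0).
by field; rewrite ?xn ?yn ?p0 ?q0.
Qed.

Lemma T2_split (A Q P B uP uQ : nat -> R) N :
  T2 (fun x y => A x * Q y + 2 * (uP x * uQ y) + P x * B y) N =
  tri A Q N + 2 * tri uP uQ N + tri P B N.
Proof.
rewrite /tri /T2 big_distrr /= -!big_split /=; apply: eq_bigr => x _.
by rewrite big_distrr /= -!big_split.
Qed.

Lemma tri_uu P Q p q N : tri (uu P p) (uu Q q) N =
  tri (sh P) (sh Q) N - q * tri (sh P) Q N - p * tri P (sh Q) N + p * q * tri P Q N.
Proof.
rewrite /tri /T2 !big_distrr /= -!sumrB -!big_split /=; apply: eq_bigr => x _.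
rewrite !big_distrr /= -!sumrB -!big_split /=; apply: eq_bigr => y _.
rewrite /uu; ring.
Qed.

End S4.

Section S5.
Variable R : realType.
Implicit Types (f g P Q : nat -> R).

Lemma cross_small P Q p q : hasSum P 1 -> hasSum Q 1 ->
  hasSum (fun x => x%:R * P x) p -> hasSum (fun x => x%:R * Q x) q ->
  forall d, 0 < d -> exists M0, forall M, (M0 <= M)%N ->
  tri (uu P p) (uu Q q) (M + M) <= d * (q * (p + 1) + p * (1 + q)).
Proof.
move=> hP hQ hmP hmQ d d0.
have hsP := hasSum_sh hmP; have hsQ := hasSum_sh hmQ.
have [M1 H1] := tri_lim _ _ _ _ _ hsP hQ d0.
have [M2 H2] := tri_lim _ _ _ _ _ hP hsQ d0.
exists (maxn M1 M2) => M hM.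
have a1 := H1 M (leq_trans (leq_maxl _ _) hM).
have a2 := H2 M (leq_trans (leq_maxr _ _) hM).
have b1 := tri_le _ _ _ _ (M + M) hsP hsQ.
have b2 := tri_le _ _ _ _ (M + M) hP hQ.
have p0 := hasSum_ge0 hmP; have q0 := hasSum_ge0 hmQ.
have c1 := ler_wpM2l q0 a1.
have c2 := ler_wpM2l p0 a2.
have c3 := ler_wpM2l (mulr_ge0 p0 q0) b2.
rewrite tri_uu; nra.
Qed.

Lemma hw_lemma P Q p q z : (forall x, P x = 0 -> uu P p x = 0) ->
  (forall x, Q x = 0 -> uu Q q x = 0) -> forall i,
  P i * Q (z - i)%N = 0 -> uu P p i * Q (z - i)%N + P i * uu Q q (z - i)%N = 0.
Proof.
move=> ZP ZQ i /eqP; rewrite mulf_eq0 => /orP[/eqP h|/eqP h].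
  by rewrite (ZP _ h) h !mul0r addr0.
by rewrite (ZQ _ h) h mulr0 mulr0 addr0.
Qed.

Lemma ZS_lemma P Q p q : (forall x, 0 <= P x) -> (forall x, 0 <= Q x) ->
  (forall x, P x = 0 -> uu P p x = 0) -> (forall x, Q x = 0 -> uu Q q x = 0) ->
  forall z, Defs.conv P Q z = 0 -> uu (Defs.conv P Q) (p + q) z = 0.
Proof.
move=> P0 Q0 ZP ZQ z hz.
have [_ T] := titu z.+1 (fun i => uu P p i * Q (z - i)%N + P i * uu Q q (z - i)%N)
   (fun i => P i * Q (z - i)%N) (fun i => mulr_ge0 (P0 i) (Q0 _)) (hw_lemma ZP ZQ).
rewrite /uu /sh conv_id; apply: T; by rewrite -convE.
Qed.

Lemma key_bound P Q p q tP tQ : hasSum P 1 -> hasSum Q 1 -> 0 < p -> 0 < q ->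
  (forall x, P x = 0 -> uu P p x = 0) -> (forall x, Q x = 0 -> uu Q q x = 0) ->
  hasSum (fun x => (uu P p x) ^+ 2 / P x / p ^+ 2) tP ->
  hasSum (fun x => (uu Q q x) ^+ 2 / Q x / q ^+ 2) tQ ->
  forall N, psum (fun z => (uu (Defs.conv P Q) (p + q) z) ^+ 2 / Defs.conv P Q z) N <=
    p ^+ 2 * tP + q ^+ 2 * tQ + 2 * tri (uu P p) (uu Q q) N.
Proof.
move=> hP hQ p0 q0 ZP ZQ hAP hAQ N.
have P0 : forall x, 0 <= P x by case: hP.
have Q0 : forall x, 0 <= Q x by case: hQ.
have hA := hasSum_scale (sqr_ge0 p) hAP.
have hB := hasSum_scale (sqr_ge0 q) hAQ.
have h1 := tri_le _ _ _ _ N hA hQ.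
have h2 := tri_le _ _ _ _ N hP hB.
rewrite mulr1 in h1; rewrite mul1r in h2.
apply: (@le_trans _ _ (T2 (fun x y => p ^+ 2 * ((uu P p x) ^+ 2 / P x / p ^+ 2) * Q y
     + 2 * (uu P p x * uu Q q y) + P x * (q ^+ 2 * ((uu Q q y) ^+ 2 / Q y / q ^+ 2))) N)); last first.
  rewrite (T2_split (fun x => p ^+ 2 * ((uu P p x) ^+ 2 / P x / p ^+ 2)) Q P
     (fun y => q ^+ 2 * ((uu Q q y) ^+ 2 / Q y / q ^+ 2))).
  lra.
rewrite -tri_conv /psum; apply: ler_sum => z _.
rewrite /uu /sh conv_id convE.
have [T _] := titu z.+1 (fun i => uu P p i * Q (z - i)%N + P i * uu Q q (z - i)%N)
   (fun i => P i * Q (z - i)%N) (fun i => mulr_ge0 (P0 i) (Q0 _)) (hw_lemma ZP ZQ).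
apply: le_trans T _; apply: ler_sum => i _.
rewrite (pt_eq (lt0r_neq0 p0) (lt0r_neq0 q0) (ZP i) (ZQ _)).
done.
Qed.

End S5.

Section S6.
Variable R : realType.
Implicit Types (f g P Q : nat -> R).

Lemma series_le_eps f c : (forall x, 0 <= f x) ->
  (forall e, 0 < e -> forall N, psum f N <= c + e) ->
  (\sum_(0 <= x <oo) (f x)%:E <= c%:E)%E.
Proof.
move=> f0 H; apply/lee_addgt0Pr => e e0; rewrite -EFinD.
by apply: series_le => // N; exact: H.
Qed.

Lemma hasSum0 : hasSum (fun _ : nat => 0 : R) 0.
Proof.
split => //; first by move=> N; rewrite /psum big1.
by move=> e e0; exists 0%N; rewrite /psum big_geq //; lra.
Qed.

Lemma tri0 (f : nat -> R) N : tri f (fun _ => 0) N = 0.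
Proof. by rewrite /tri /T2 big1 // => x _; rewrite big1 // => y _; rewrite mulr0. Qed.

Lemma meanE f c : hasSum (fun x => x%:R * f x) c -> mean f = c.
Proof. by move=> h; rewrite /mean /mean_e (hasSum_series _ _ h). Qed.

Lemma ge0_neqNy (x : \bar R) : (0 <= x)%E -> x != -oo%E.
Proof. by case: x. Qed.

Lemma K_ge0 f c : hasSum f 1 -> hasSum (fun x => x%:R * f x) c -> 0 < c -> (0 <= K f)%E.
Proof.
move=> [f0 _ _] h c0; rewrite /K (meanE h); apply: mule_ge0; first by rewrite lee_fin ltW.
by apply: nneseries_ge0 => n _ _; exact: fisher_ge0.
Qed.

Lemma step P Q p q : hasSum P 1 -> hasSum Q 1 ->
  hasSum (fun x => x%:R * P x) p -> hasSum (fun x => x%:R * Q x) q -> 0 < p -> 0 < q ->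
  [/\ hasSum (Defs.conv P Q) 1, hasSum (fun x => x%:R * Defs.conv P Q x) (p + q) &
  (K (Defs.conv P Q) <= (p / (p + q))%:E * K P + (q / (p + q))%:E * K Q)%E].
Proof.
move=> hP hQ hmP hmQ p0 q0.
have P0 : forall x, 0 <= P x by case: hP.
have Q0 : forall x, 0 <= Q x by case: hQ.
have S0 : forall x, 0 <= Defs.conv P Q x by move=> x; exact: conv_ge0.
have hS : hasSum (Defs.conv P Q) 1.
  have E : forall N, psum (Defs.conv P Q) N = tri P Q N + tri (fun _ => 0) (fun _ => 0) N.
    by move=> N; rewrite tri0 addr0 psum_conv.
  have := hasSum_tri2 hP hQ hasSum0 hasSum0 S0 E.
  by rewrite mulr1 mul0r addr0.
have hmS : hasSum (fun x => x%:R * Defs.conv P Q x) (p + q).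
  have := hasSum_tri2 hmP hQ hP hmQ (fun x => mulr_ge0 (ler0n _ _) (S0 x)) (psum_conv_mean P Q).
  by rewrite mulr1 mul1r.
split => //.
have lp : 0 < p + q by lra.
rewrite /K (meanE hmS) (meanE hmP) (meanE hmQ).
have KP0 : (0 <= p%:E * \sum_(0 <= x <oo) fisher_term P p x)%E.
  by apply: mule_ge0; [rewrite lee_fin ltW|apply: nneseries_ge0 => n _ _; exact: fisher_ge0].
have KQ0 : (0 <= q%:E * \sum_(0 <= x <oo) fisher_term Q q x)%E.
  by apply: mule_ge0; [rewrite lee_fin ltW|apply: nneseries_ge0 => n _ _; exact: fisher_ge0].
have pl0 : 0 < p / (p + q) by apply: divr_gt0.
have ql0 : 0 < q / (p + q) by apply: divr_gt0.
have [eP|nP] := eqVneq (\sum_(0 <= x <oo) fisher_term P p x)%E +oo%E.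
  rewrite eP gt0_muley ?lte_fin // gt0_muley ?lte_fin // addye ?leey //.
  by apply: ge0_neqNy; apply: mule_ge0 => //; rewrite lee_fin ltW.
have [eQ|nQ] := eqVneq (\sum_(0 <= x <oo) fisher_term Q q x)%E +oo%E.
  rewrite eQ (gt0_muley (x:=q%:E)) ?lte_fin // (gt0_muley (x:=(q / (p + q))%:E)) ?lte_fin // addey ?leey //.
  by apply: ge0_neqNy; apply: mule_ge0 => //; rewrite lee_fin ltW.
have [ZP [tP [hAP eP]]] := series_fin P0 p0 nP.
have [ZQ [tQ [hAQ eQ]]] := series_fin Q0 q0 nQ.
rewrite eP eQ -!EFinM -EFinD.
have bound : (\sum_(0 <= x <oo) fisher_term (Defs.conv P Q) (p + q) x <=
   ((p ^+ 2 * tP + q ^+ 2 * tQ) / (p + q) ^+ 2)%:E)%E.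
  have ZS := ZS_lemma P0 Q0 ZP ZQ.
  have E : (\sum_(0 <= x <oo) fisher_term (Defs.conv P Q) (p + q) x =
     \sum_(0 <= x <oo) ((uu (Defs.conv P Q) (p + q) x) ^+ 2 / Defs.conv P Q x / (p + q) ^+ 2)%:E)%E.
    by apply: eq_eseriesr => x _; apply: fisher_E => //; exact: ZS.
  rewrite E; apply: series_le_eps.
    by move=> x; apply: divr_ge0; [apply: divr_ge0; [exact: sqr_ge0|exact: S0]|exact: sqr_ge0].
  move=> e e0 N.
  set K0 := q * (p + 1) + p * (1 + q).
  have K00 : 0 < K0 by rewrite /K0; nra.
  have l20 : 0 < (p + q) ^+ 2 by apply: exprn_gt0.
  set d := e * (p + q) ^+ 2 / (2 * K0).
  have d0 : 0 < d by rewrite /d; apply: divr_gt0; [apply: mulr_gt0|lra].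
  have [M0 HM] := cross_small hP hQ hmP hmQ d0.
  have h1 := key_bound hP hQ p0 q0 ZP ZQ hAP hAQ (maxn M0 N + maxn M0 N).
  have h2 := HM (maxn M0 N) (leq_maxl _ _).
  have h3 : 2 * (d * K0) = e * (p + q) ^+ 2 by rewrite /d; field; rewrite gt_eqF.
  apply: (@le_trans _ _ (psum (fun x => (uu (Defs.conv P Q) (p + q) x) ^+ 2 / Defs.conv P Q x / (p + q) ^+ 2) (maxn M0 N + maxn M0 N))).
    apply: (psum_mono _ N (maxn M0 N + maxn M0 N)); last exact: (leq_trans (leq_maxr M0 N) (leq_addr _ _)).
    by move=> x; apply: divr_ge0; [apply: divr_ge0; [exact: sqr_ge0|exact: S0]|exact: sqr_ge0].
  rewrite /psum -mulr_suml -/(psum _ _) ler_pdivrMr //.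
  rewrite mulrDl divfK ?gt_eqF //; rewrite /K0 in h3; lra.
apply: le_trans (lee_wpmul2l _ bound) _; first by rewrite lee_fin ltW.
rewrite -EFinM lee_fin le_eqVlt; apply/orP; left; apply/eqP.
by field; rewrite gt_eqF.
Qed.

End S6.

Section S7.
Variable R : realType.

Lemma conv_dirac0 (P : nat -> R) : Defs.conv P (@Defs.dirac0 R) = P.
Proof.
apply/funext => z; rewrite convE big_nat_recr //= subnn /Defs.dirac0 eqxx mulr1.
rewrite big1_seq ?add0r // => i; rewrite mem_index_iota => /andP[_ hi].
by rewrite ifN ?mulr0 // subn_eq0 -ltnNge.
Qed.

Lemma gen n : forall (P : 'I_n.+1 -> nat -> R) (p : 'I_n.+1 -> R),
  (forall i, hasSum (P i) 1) -> (forall i, hasSum (fun x => x%:R * P i x) (p i)) ->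
  (forall i, 0 < p i) ->
  [/\ hasSum (conv_all P) 1, hasSum (fun x => x%:R * conv_all P x) (\sum_(i < n.+1) p i) &
   (K (conv_all P) <= \sum_(i < n.+1) ((p i / \sum_(j < n.+1) p j)%:E * K (P i)))%E].
Proof.
elim: n => [|n IH] P p hP hm hp.
  rewrite /conv_all big_ord_recl big_ord0 conv_dirac0 !big_ord1.
  split => //; rewrite divff ?gt_eqF // mul1e //.
have EC : conv_all P = Defs.conv (P ord0) (conv_all (fun i => P (lift ord0 i))).
  by rewrite /conv_all big_ord_recl.
have Ep : \sum_(i < n.+2) p i = p ord0 + \sum_(i < n.+1) p (lift ord0 i).
  by rewrite big_ord_recl.
have [h1 h2 h3] := IH (fun i => P (lift ord0 i)) (fun i => p (lift ord0 i))
   (fun i => hP _) (fun i => hm _) (fun i => hp _).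
have l0 : 0 < \sum_(i < n.+1) p (lift ord0 i) .
  rewrite big_ord_recl; apply: (lt_le_trans (hp (lift ord0 ord0))); rewrite lerDl.
  by apply: sumr_ge0 => i _; exact: ltW.
have [s1 s2 s3] := step (hP ord0) h1 (hm ord0) h2 (hp ord0) l0.
rewrite EC Ep; split => //.
rewrite big_ord_recl.
apply: le_trans s3 _; apply: leeD2l.
set l' := \sum_(i < n.+1) p (lift ord0 i).
set l := p ord0 + l'.
have lp : 0 < l by rewrite /l; apply: addr_gt0.
apply: le_trans (lee_wpmul2l _ h3) _; first by rewrite lee_fin ltW // divr_gt0.
rewrite ge0_sume_distrr; last first.
  move=> i _; apply: mule_ge0; first by rewrite lee_fin ltW // divr_gt0.
  exact: (K_ge0 (hP _) (hm _) (hp _)).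
rewrite le_eqVlt; apply/orP; left; apply/eqP; apply: eq_bigr => i _.
rewrite muleA -EFinM; congr (_ * _)%E; congr EFin.
have El : \sum_(j < n.+1) p (lift ord0 j) = l' by [].
rewrite El; field; rewrite ?gt_eqF // ?lp //.
Qed.

End S7.

Unset Implicit Arguments. Set Strict Implicit.
Local Open Scope ereal_scope.
Theorem proposition3 (R : realType) (n : nat) (P : 'I_n -> nat -> R)
    (p : 'I_n -> R) :
  (0 < n)%N ->
  (forall i, is_pmf (P i)) ->
  (forall i, mean_e (P i) = (p i)%:E) ->
  (forall i, (0 < p i)%R) ->
  let lambda := (\sum_(i < n) p i)%R in
  K (conv_all P) <= \sum_(i < n) ((p i / lambda)%:E * K (P i)).
Proof.
case: n P p => // n P p _ hP hm hp.
have hP' : forall i, hasSum (P i) 1%R.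
  by move=> i; have [h0 h1] := hP i; apply: hasSumE.
have hm' : forall i, hasSum (fun x => (x%:R * P i x)%R) (p i).
  move=> i; apply: hasSumE; last exact: hm.
  by move=> x; apply: mulr_ge0 => //; have [h0 _] := hP i; exact: h0.
have [_ _ h] := gen hP' hm' hp; exact: h.
Qed.
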